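(* Let $\lambda\in\mathbb R$, $G_\lambda(x)=\frac{x^3}{8} - \frac{\lambda x^2}{2} + \frac{\lambda^2 x}{2}$, and let $r\ge 0$ be a constant. For integers $k$ with $(1\vee 3\lambda) n^{2/3}\le k \le n^{3/4}$ and $|\lambda|\le n^{1/12}$, \[\frac{1}{n^{2/3}}\sum_{j=k}^{\lfloor n^{3/4}\rfloor} \Big(\frac{j}{n^{2/3}}\Big)^{r} e^{-G_\lambda(j/n^{2/3})} = \frac{(k/n^{2/3})^{r}}{G'_\lambda(k/n^{2/3})} e^{-G_\lambda(k/n^{2/3})} \Big(1+O\big(\tfrac{n^2}{k^3}\big)\Big) + O\big(n^{(r-2)/12}e^{-G_\lambda(n^{1/12})}\big).\]
   Context: $G'_\lambda$ is the derivative of $G_\lambda$; $x\vee y=\max(x,y)$. $f=g(1+O(h))+O(h')$ means $|f-g|\le C|g|h+Ch'$ for a constant $C$ depending only on $r$, for all sufficiently large $n$ and all parameters satisfying the hypotheses. *)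

(* Defs.v *)
From Stdlib Require Import Reals List.
Open Scope R_scope.

Definition G (lam x : R) : R := x ^ 3 / 8 - lam * x ^ 2 / 2 + lam ^ 2 * x / 2.

Definition G' (lam x : R) : R := 3 * x ^ 2 / 8 - lam * x + lam ^ 2 / 2.

(* floor of a real, as a natural number (for nonnegative arguments) *)
Definition nfloor (x : R) : nat := Z.to_nat (Int_part x).

(* sum_{j=a}^{b} f j  (empty if b < a) *)
Definition sum_range (a b : nat) (f : nat -> R) : R :=
  fold_right Rplus 0 (map f (seq a (S b - a))).

(* Main.v *)
Require Import Defs.
From Stdlib Require Import Reals Lra Lia Psatz List ZArith.
Open Scope R_scope.

Lemma exp_m1_bound t : Rabs t <= 1 -> Rabs (exp t - 1) <= 3 * Rabs t.
Proof.
  intros Ht.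
  pose proof (exp_ineq1_le t) as H1.
  pose proof (exp_ineq1_le (-t)) as H2.
  assert (E : exp t * exp (-t) = 1) by (rewrite <- exp_plus; replace (t + - t) with 0 by ring; apply exp_0).
  destruct (Rle_or_lt 0 t) as [Hp|Hn].
  - rewrite (Rabs_right t) in * by lra.
    assert (exp t <= 3).
    { apply Rle_trans with (exp 1). destruct (Req_dec t 1) as [->|]; [lra|].
      left; apply exp_increasing; lra. apply exp_le_3. }
    assert (Hpos : 0 < exp t) by apply exp_pos.
    rewrite Rabs_right by lra.
    assert (exp t - 1 <= t * exp t) by nra. nra.
  - rewrite (Rabs_left t) in * by lra.
    assert (exp t <= 1). { rewrite <- exp_0. left; apply exp_increasing; lra. }
    rewrite Rabs_left1 by lra. lra.
Qed.

Lemma expm_u u : 0 <= u <= 1 -> Rabs (u - 1 + exp (- u)) <= u ^ 2.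
Proof.
  intros Hu.
  pose proof (exp_ineq1_le (-u)).
  assert (Hs : (1 + u/2)^2 <= exp u).
  { replace u with (u/2 + u/2) at 2 by field. rewrite exp_plus.
    pose proof (exp_ineq1_le (u/2)). nra. }
  assert (E : exp u * exp (-u) = 1) by (rewrite <- exp_plus; replace (u + - u) with 0 by ring; apply exp_0).
  assert (Hp : 0 < exp (-u)) by apply exp_pos.
  assert (exp (-u) <= 1 - u + u^2).
  { assert (1 <= (1 - u + u^2) * (1 + u/2)^2) by nra.
    nra. }
  rewrite Rabs_right by lra. lra.
Qed.

Lemma ln_le_sub1 y : 0 < y -> ln y <= y - 1.
Proof. intros. pose proof (exp_ineq1_le (ln y)). rewrite exp_ln in H0; lra. Qed.

Definition Gpp (lam x : R) := 3 * x / 4 - lam.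

Lemma Gp_lb lam x : 1 <= x -> 3 * lam <= x -> 7/80 * (x^2 + lam^2) <= G' lam x.
Proof. intros. unfold G'. destruct (Rle_or_lt lam 0); nra. Qed.

Lemma Gp_ub lam x : G' lam x <= x^2 + lam^2.
Proof. unfold G'. pose proof (pow2_ge_0 (lam + x)). pose proof (pow2_ge_0 x). nra. Qed.

Lemma Gpp_b lam x : 0 <= x -> 3 * lam <= x -> 0 <= Gpp lam x <= x + Rabs lam.
Proof. intros. unfold Gpp. pose proof (Rle_abs (-lam)). rewrite Rabs_Ropp in H1. lra. Qed.

Lemma Gp_diff lam x d : G' lam (x + d) - G' lam x = d * Gpp lam x + 3 * d^2 / 8.
Proof. unfold G', Gpp. field. Qed.

Lemma G_diff lam x d : G lam (x + d) - G lam x - d * G' lam x = d^2 * Gpp lam x / 2 + d^3 / 8.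
Proof. unfold G, G', Gpp. field. Qed.

Lemma G_diff2 lam x d : G lam (x + d) - G lam x = d * G' lam x + d^2 * Gpp lam x / 2 + d^3 / 8.
Proof. unfold G, G', Gpp. field. Qed.


Lemma poly1 x a : 1 <= x -> 0 <= a -> (x + a + 1) * x^3 <= 3 * (x^2 + a^2)^2.
Proof. intros. assert (x^3 <= x^4) by (simpl; nra).
  assert ((x+a)*x^3 <= 2*(x^2+a^2)^2).
  { assert (0 <= a*x) by nra. assert (0 <= x^2) by nra.
    assert (a * x^3 <= x^4 + a^2*x^2) by (pose proof (pow2_ge_0 (x - a)); simpl; nra).
    simpl. nra. }
  assert (x^4 <= (x^2+a^2)^2) by (simpl; nra). nra. Qed.

Lemma ln_le' a b : 0 < a -> a <= b -> ln a <= ln b.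
Proof. intros. destruct H0. left; apply ln_increasing; lra. subst; lra. Qed.

Lemma ln_step x d : 0 < x -> 0 <= d -> 0 <= ln (x + d) - ln x <= d / x.
Proof.
  intros. split.
  - pose proof (ln_le' x (x+d)); lra.
  - assert (x + d <= x * exp (d / x)).
    { pose proof (exp_ineq1_le (d/x)). assert (x * (1 + d/x) = x + d) by (field; lra). nra. }
    pose proof (ln_le' (x+d) (x * exp (d/x)) ltac:(lra) H1).
    rewrite ln_mult, ln_exp in H2 by (try apply exp_pos; lra). lra.
Qed.

Definition hh (r lam x : R) := exp (r * ln x - G lam x).
Definition phi (r lam x : R) := hh r lam x / G' lam x.
Definition Cst1 (r : R) := 1 + 3 * (r + 2) * (80/7) + 3 * (80/7)^2.

Lemma abs_sq a : Rabs a ^ 2 = a ^ 2.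
Proof. rewrite <- Rsqr_pow2, <- Rsqr_pow2. symmetry; apply Rsqr_abs. Qed.

Lemma step r lam X x d :
  0 <= r -> 2 <= X -> Rabs lam <= X -> 0 < d -> d * X^5 <= 1/2 -> r * d <= 1/2 ->
  1 <= x -> 3 * lam <= x -> x <= X ->
  Rabs (d * hh r lam x - (phi r lam x - phi r lam (x + d))) <= Cst1 r * (d * hh r lam x / x^3).
Proof.
  intros Hr HX Hl Hd HdX Hrd Hx1 Hlx HxX.
  set (a := Rabs lam).
  assert (Ha : 0 <= a) by apply Rabs_pos.
  assert (Ha2 : a^2 = lam^2) by apply abs_sq.
  set (m := x^2 + lam^2).
  set (gx := G' lam x). set (gy := G' lam (x + d)).
  assert (Hgx : 7/80 * m <= gx) by (apply Gp_lb; lra).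
  assert (Hgxu : gx <= m) by apply Gp_ub.
  assert (Hm1 : 1 <= m) by (unfold m; nra).
  assert (Hpp := Gpp_b lam x ltac:(lra) Hlx).
  assert (Hgd : gy - gx = d * Gpp lam x + 3 * d^2/8) by apply Gp_diff.
  assert (Hgxp : 0 < gx) by lra.
  assert (Hgy : gx <= gy) by nra.
  assert (HX3 : 8 <= X^3) by (assert (4 <= X*X) by nra; simpl; nra).
  assert (HX5 : X^2 * 8 <= X^5).
  { replace (X^5) with (X^2 * X^3) by ring. assert (0 <= X^2) by nra. nra. }
  assert (Hd1 : d <= 1/2).
  { assert (1 <= X^5) by (assert (4 <= X^2) by (simpl; nra); lra).
    apply Rle_trans with (d * X^5). rewrite <- (Rmult_1_r d) at 1. apply Rmult_le_compat_l; lra. lra. }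
  assert (HmX : m <= 2 * X^2).
  { unfold m. rewrite <- Ha2. assert (a <= X) by (unfold a; lra). simpl; nra. }
  set (u := d * gx).
  assert (Hu0 : 0 <= u) by (unfold u; nra).
  assert (Hu1 : u <= 1) by (unfold u; nra).
  set (eps := r * (ln (x + d) - ln x) - (G lam (x + d) - G lam x - d * gx)).
  assert (Hhy : hh r lam (x + d) = hh r lam x * exp (- u + eps)).
  { unfold hh. rewrite <- exp_plus. f_equal. unfold eps, u, gx. ring. }
  set (Q := gx / gy).
  assert (HQ : 0 < Q <= 1).
  { unfold Q. split. apply Rdiv_lt_0_compat; lra.
    apply Rmult_le_reg_r with gy. lra. field_simplify; lra. }
  assert (Hhxp : 0 < hh r lam x) by apply exp_pos.
  assert (Hid : d * hh r lam x - (phi r lam x - phi r lam (x + d)) =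
                hh r lam x / gx * (u - 1 + exp (- u + eps) * Q)).
  { unfold phi. rewrite Hhy. fold gx gy. unfold Q, u. field. split; lra. }
  pose proof (ln_step x d ltac:(lra) ltac:(lra)) as Hln.
  pose proof (G_diff lam x d) as HGd. fold gx in HGd.
  set (D := d ^ 2 * Gpp lam x / 2 + d ^ 3 / 8).
  assert (HD0 : 0 <= D) by (unfold D; simpl; nra).
  assert (Hdx : d / x <= d).
  { apply Rmult_le_reg_r with x. lra. field_simplify; nra. }
  assert (HdX2 : d * X^4 <= 1/4) by (simpl in *; nra).
  assert (Hx3 : x^3 <= X^3) by (apply pow_incr; lra).
  assert (Hx3' : 1 <= x^3) by (simpl; nra).
  assert (HDx : D * x^3 <= d).
  { unfold D. assert (Gpp lam x * x^3 <= 2 * X^4).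
    { assert (Gpp lam x <= 2 * X) by (unfold a in *; lra). simpl in *. nra. }
    assert (X^3 <= X^4) by (simpl; nra).
    assert (d * x^3 <= 1/4) by nra.
    assert (d <= 1) by (assert (1 <= X^4) by nra; nra).
    assert (d^3 * x^3 <= d) by (replace (d^3 * x^3) with (d * d * (d * x^3)) by ring; assert (0 <= d*d) by nra; nra).
    simpl in *; nra. }
  assert (Heps : Rabs eps <= r * (d / x) + D).
  { unfold eps. rewrite HGd. fold D. apply Rabs_le.
    assert (0 <= r * (ln (x + d) - ln x) <= r * (d / x)) by (split; nra). lra. }
  assert (Heps1 : Rabs eps <= 1).
  { assert (D <= 1/2) by nra. assert (r * (d/x) <= 1/2) by nra. lra. }
  assert (HB : Rabs (u - 1 + exp (- u + eps) * Q) <= u^2 + 3 * Rabs eps + (1 - Q)).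
  { replace (u - 1 + exp (- u + eps) * Q) with
      ((u - 1 + exp (- u)) + exp (-u) * (exp eps - 1) * Q - exp (-u) * (1 - Q))
      by (rewrite exp_plus; ring).
    pose proof (expm_u u ltac:(lra)).
    pose proof (exp_m1_bound eps Heps1).
    assert (0 < exp (-u) <= 1).
    { split. apply exp_pos. rewrite <- exp_0. destruct Hu0. left; apply exp_increasing; lra.
      rewrite <- H1. rewrite Ropp_0. lra. }
    assert (Rabs (exp (-u) * (exp eps - 1) * Q) <= 3 * Rabs eps).
    { rewrite !Rabs_mult. rewrite (Rabs_right (exp (-u))) by lra. rewrite (Rabs_right Q) by lra.
      pose proof (Rabs_pos (exp eps - 1)).
      assert (exp (-u) * Q <= 1).
      { apply Rle_trans with (1 * 1). apply Rmult_le_compat; lra. lra. }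
      replace (exp (- u) * Rabs (exp eps - 1) * Q) with ((exp (-u) * Q) * Rabs (exp eps - 1)) by ring.
      apply Rle_trans with (1 * Rabs (exp eps - 1)). apply Rmult_le_compat_r; lra. lra. }
    assert (0 <= exp (-u) * (1 - Q) <= 1 - Q).
    { split. apply Rmult_le_pos; lra. rewrite <- (Rmult_1_l (1 - Q)) at 2. apply Rmult_le_compat_r; lra. }
    eapply Rle_trans. apply Rabs_triang. rewrite Rabs_Ropp.
    eapply Rle_trans. apply Rplus_le_compat_r. apply Rabs_triang.
    rewrite (Rabs_right (exp (-u) * (1 - Q))) by lra. lra. }
  assert (Pa : u^2 * x^3 <= d * gx).
  { unfold u. assert (d * gx * x^3 <= 1).
    { assert (gx * x^3 <= 2 * X^5) by (simpl in *; nra). nra. }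
    assert (0 <= d * gx) by nra. simpl in *; nra. }
  assert (Pb : r * (d / x) * x^3 <= 80/7 * r * (d * gx)).
  { replace (r * (d / x) * x^3) with (r * d * x^2) by (field; lra).
    assert (x^2 <= m) by (unfold m; nra).
    assert (x^2 <= 80/7 * gx) by lra. assert (0 <= r * d) by nra.
    replace (80/7 * r * (d * gx)) with (r * d * (80/7 * gx)) by ring.
    apply Rmult_le_compat_l; lra. }
  assert (Pc : D * x^3 <= 80/7 * (d * gx)).
  { assert (1 <= 80/7 * gx) by nra.
    apply Rle_trans with (d * 1). lra. rewrite Rmult_comm, (Rmult_comm d). rewrite <- Rmult_assoc.
    apply Rmult_le_compat_r; lra. }
  assert (Pd : (1 - Q) * x^3 <= 3 * (80/7)^2 * (d * gx)).
  { assert (E1 : 1 - Q = (gy - gx) * / gy) by (unfold Q; field; lra).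
    assert (Hi : / gy <= / gx) by (apply Rinv_le_contravar; lra).
    assert (Hgg : gy - gx <= d * (x + a + 1)).
    { rewrite Hgd. assert (3 * d^2 / 8 <= d) by (assert (d*d <= d*1) by (apply Rmult_le_compat_l; lra); replace (d^2) with (d*d) by ring; lra).
      assert (d * Gpp lam x <= d * (x + a)) by (apply Rmult_le_compat_l; unfold a; lra). lra. }
    assert (Hq : 1 - Q <= d * (x + a + 1) * / gx).
    { rewrite E1. apply Rle_trans with ((gy - gx) * / gx).
      apply Rmult_le_compat_l; lra. apply Rmult_le_compat_r. left; apply Rinv_0_lt_compat; lra. lra. }
    assert (H3 : (x + a + 1) * x^3 <= 3 * m^2) by (unfold m; rewrite <- Ha2; apply poly1; lra).
    assert (H4 : m^2 <= (80/7)^2 * gx^2).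
    { assert (0 <= m) by lra. replace ((80/7)^2 * gx^2) with ((80/7 * gx)^2) by ring.
      apply pow_incr. lra. }
    assert (H5 : d * (x + a + 1) * x^3 <= 3 * (80/7)^2 * (d * gx) * gx).
    { replace (3 * (80/7)^2 * (d * gx) * gx) with (d * (3 * ((80/7)^2 * gx^2))) by ring.
      replace (d * (x + a + 1) * x^3) with (d * ((x + a + 1) * x^3)) by ring.
      apply Rmult_le_compat_l; lra. }
    apply Rle_trans with (d * (x + a + 1) * / gx * x^3).
    apply Rmult_le_compat_r; lra.
    replace (d * (x + a + 1) * / gx * x^3) with (d * (x + a + 1) * x^3 * / gx) by ring.
    replace (3 * (80/7)^2 * (d * gx)) with (3 * (80/7)^2 * (d * gx) * gx * / gx) by (field; lra).
    apply Rmult_le_compat_r. left; apply Rinv_0_lt_compat; lra. lra. }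
  rewrite Hid, Rabs_mult, Rabs_right by (apply Rle_ge, Rlt_le, Rdiv_lt_0_compat; lra).
  apply Rle_trans with (hh r lam x / gx * (u^2 + 3 * Rabs eps + (1 - Q))).
  { apply Rmult_le_compat_l. apply Rlt_le, Rdiv_lt_0_compat; lra. exact HB. }
  assert (Htot : (u^2 + 3 * Rabs eps + (1 - Q)) * x^3 <= Cst1 r * (d * gx)).
  { unfold Cst1. assert (Rabs eps * x^3 <= r * (d/x) * x^3 + D * x^3) by nra. nra. }
  set (W := u^2 + 3 * Rabs eps + (1 - Q)) in *.
  replace (hh r lam x / gx * W) with (hh r lam x / (gx * x^3) * (W * x^3)) by (field; lra).
  replace (Cst1 r * (d * hh r lam x / x^3)) with (hh r lam x / (gx * x^3) * (Cst1 r * (d * gx))) by (field; lra).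
  apply Rmult_le_compat_l. apply Rlt_le, Rdiv_lt_0_compat; nra. exact Htot.
Qed.

Fixpoint sumF (g : nat -> R) (L : nat) : R :=
  match L with O => 0 | S L' => g O + sumF (fun i => g (S i)) L' end.

Lemma sumF_ext L : forall g g', (forall i, (i < L)%nat -> g i = g' i) -> sumF g L = sumF g' L.
Proof. induction L; intros g g' H; simpl. reflexivity.
  rewrite (H 0%nat) by lia. f_equal. apply IHL. intros; apply H; lia. Qed.

Lemma sum_range_F a b f : sum_range a b f = sumF (fun i => f (a + i)%nat) (S b - a).
Proof.
  unfold sum_range. generalize (S b - a)%nat as L. intro L. revert a.
  induction L; intros a; simpl. reflexivity.
  rewrite IHL. rewrite Nat.add_0_r. f_equal. apply sumF_ext. intros; f_equal; lia.
Qed.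

Lemma sumF_le L : forall g g', (forall i, (i < L)%nat -> g i <= g' i) -> sumF g L <= sumF g' L.
Proof. induction L; intros g g' H; simpl. lra.
  apply Rplus_le_compat. apply H; lia. apply IHL. intros; apply H; lia. Qed.

Lemma sumF_abs L : forall g, Rabs (sumF g L) <= sumF (fun i => Rabs (g i)) L.
Proof. induction L; intros g; simpl. rewrite Rabs_R0; lra.
  eapply Rle_trans. apply Rabs_triang. apply Rplus_le_compat_l. apply IHL. Qed.

Lemma sumF_scal L : forall g c, sumF (fun i => c * g i) L = c * sumF g L.
Proof. induction L; intros g c; simpl. ring. rewrite (IHL (fun i => g (S i))). ring. Qed.

Lemma sumF_minus L : forall g g', sumF (fun i => g i - g' i) L = sumF g L - sumF g' L.
Proof. induction L; intros g g'; simpl. ring. rewrite (IHL (fun i => g (S i)) (fun i => g' (S i))). ring. Qed.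

Lemma sumF_tele L : forall p, sumF (fun i => p i - p (S i)) L = p O - p L.
Proof. induction L; intros p; simpl. ring. rewrite (IHL (fun i => p (S i))). ring. Qed.

Lemma sumF_geom L q : 0 <= q < 1 -> sumF (fun i => q ^ i) L <= / (1 - q).
Proof.
  intros Hq. assert (forall L, sumF (fun i => q ^ i) (S L) = 1 + q * sumF (fun i => q ^ i) L).
  { intros L'. simpl. f_equal. rewrite <- sumF_scal. apply sumF_ext. intros; simpl; ring. }
  induction L. simpl. assert (0 < / (1 - q)) by (apply Rinv_0_lt_compat; lra). lra.
  rewrite H. assert (1 + q * / (1 - q) = / (1 - q)) by (field; lra).
  assert (q * sumF (fun i => q ^ i) L <= q * / (1 - q)) by (apply Rmult_le_compat_l; lra). lra.
Qed.

Lemma sumF_nonneg L : forall g, (forall i, (i < L)%nat -> 0 <= g i) -> 0 <= sumF g L.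
Proof. intros. replace 0 with (sumF (fun _ => 0) L). apply sumF_le; auto.
  clear H. induction L; simpl; auto. rewrite IHL; ring. Qed.

Lemma exp_INR_pow n a : exp (INR n * a) = exp a ^ n.
Proof. induction n. simpl. rewrite Rmult_0_l; apply exp_0.
  rewrite S_INR. replace ((INR n + 1) * a) with (a + INR n * a) by ring. rewrite exp_plus, IHn. simpl. ring. Qed.

Lemma exp_le a b : a <= b -> exp a <= exp b.
Proof. intros [H|H]. left; apply exp_increasing; auto. subst; lra. Qed.

Lemma hh_decay r lam x t : 0 <= r -> 1 <= x -> 3 * lam <= x -> 0 <= t ->
  hh r lam (x + t) <= exp (6/5 * r^2) * hh r lam x * exp (- (t * G' lam x)).
Proof.
  intros Hr Hx Hl Ht. unfold hh. rewrite <- !exp_plus. apply exp_le.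
  pose proof (ln_step x t ltac:(lra) Ht) as Hln.
  pose proof (G_diff2 lam x t) as Hg.
  assert (Hpp : 5/12 <= Gpp lam x) by (unfold Gpp; lra).
  assert (Htx : t / x <= t).
  { unfold Rdiv. rewrite <- (Rmult_1_r t) at 2. apply Rmult_le_compat_l. lra.
    rewrite <- Rinv_1. apply Rinv_le_contravar; lra. }
  assert (r * (ln (x + t) - ln x) <= r * t) by (apply Rmult_le_compat_l; lra).
  assert (t^2 * Gpp lam x / 2 >= 5/24 * t^2).
  { assert (0 <= t^2) by nra. assert (t^2 * (5/12) <= t^2 * Gpp lam x) by (apply Rmult_le_compat_l; lra). lra. }
  assert (0 <= t^3 / 8) by (simpl; assert (0 <= t*t) by nra; assert (0 <= t*(t*t)) by nra; lra).
  assert (r * t - 5/24 * t^2 <= 6/5 * r^2) by (pose proof (pow2_ge_0 (t - 12/5 * r)); simpl in *; nra).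
  lra.
Qed.

Lemma Gp_pos lam x : 1 <= x -> 3 * lam <= x -> 0 < G' lam x.
Proof. intros. pose proof (Gp_lb lam x H H0). assert (0 <= lam^2) by nra. simpl in *. nra. Qed.

Lemma sum_bound r lam X d x0 L :
  0 <= r -> 2 <= X -> Rabs lam <= X -> 0 < d -> d * X^5 <= 1/2 ->
  1 <= x0 -> 3 * lam <= x0 -> x0 <= X ->
  d * sumF (fun i => hh r lam (x0 + INR i * d)) L <= 2 * exp (6/5 * r^2) * phi r lam x0.
Proof.
  intros Hr HX Hl Hd HdX Hx1 Hlx HxX.
  set (g := G' lam x0).
  assert (Hg : 0 < g) by (apply Gp_pos; lra).
  set (u := d * g).
  assert (Hu0 : 0 < u) by (unfold u; nra).
  assert (Hu1 : u <= 1).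
  { assert (g <= x0^2 + lam^2) by apply Gp_ub.
    assert (x0^2 + lam^2 <= 2 * X^2).
    { rewrite <- (abs_sq lam). assert (0 <= Rabs lam) by apply Rabs_pos. simpl; nra. }
    assert (HX3 : 8 <= X^3) by (assert (4 <= X*X) by nra; simpl; nra).
    assert (X^2 * 8 <= X^5).
    { replace (X^5) with (X^2 * X^3) by ring. assert (0 <= X^2) by nra. nra. }
    unfold u. assert (d * g <= d * (2 * X^2)) by (apply Rmult_le_compat_l; lra). nra. }
  set (q := exp (- u)).
  assert (Hq : 0 <= q < 1).
  { split. left; apply exp_pos. rewrite <- exp_0. apply exp_increasing; lra. }
  assert (Hq2 : q <= / (1 + u)).
  { pose proof (exp_ineq1_le u). unfold q. rewrite exp_Ropp. apply Rinv_le_contravar; lra. }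
  assert (Hhx : 0 < hh r lam x0) by apply exp_pos.
  set (K := exp (6/5 * r^2)).
  assert (HK : 0 < K) by apply exp_pos.
  assert (H1 : sumF (fun i => hh r lam (x0 + INR i * d)) L <= sumF (fun i => K * hh r lam x0 * q ^ i) L).
  { apply sumF_le. intros i _. eapply Rle_trans. apply hh_decay; try lra.
    apply Rmult_le_pos. apply pos_INR. lra.
    unfold q. rewrite <- exp_INR_pow. fold K g. right. f_equal. f_equal. unfold u. ring. }
  rewrite sumF_scal in H1.
  pose proof (sumF_geom L q Hq).
  assert (Hinv : / (1 - q) <= (1 + u) / u).
  { assert (u / (1 + u) <= 1 - q).
    { assert (u / (1 + u) = 1 - / (1 + u)) by (field; lra). lra. }
    replace ((1 + u) / u) with (/ (u / (1 + u))) by (field; lra).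
    apply Rinv_le_contravar. apply Rdiv_lt_0_compat; lra. lra. }
  assert (Hs : sumF (fun i => q ^ i) L <= 2 / u).
  { apply Rle_trans with ((1 + u) / u). lra. unfold Rdiv. apply Rmult_le_compat_r.
    left; apply Rinv_0_lt_compat; lra. lra. }
  assert (0 <= K * hh r lam x0) by (apply Rmult_le_pos; lra).
  apply Rle_trans with (d * (K * hh r lam x0 * (2 / u))).
  { apply Rmult_le_compat_l. lra. eapply Rle_trans. apply H1. apply Rmult_le_compat_l; [lra| exact Hs]. }
  unfold phi. fold g. right. unfold u. field. split; lra.
Qed.

Lemma main_real r lam X d x0 L :
  0 <= r -> 2 <= X -> Rabs lam <= X -> 0 < d -> d * X^5 <= 1/2 -> r * d <= 1/2 ->
  1 <= x0 -> 3 * lam <= x0 -> x0 <= X ->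
  (forall i, (i < L)%nat -> x0 + INR i * d <= X) ->
  Rabs (d * sumF (fun i => hh r lam (x0 + INR i * d)) L - phi r lam x0)
  <= Cst1 r * (2 * exp (6/5 * r^2)) * (phi r lam x0 / x0^3) + phi r lam (x0 + INR L * d).
Proof.
  intros Hr HX Hl Hd HdX Hrd Hx1 Hlx HxX Hi.
  set (p := fun i => phi r lam (x0 + INR i * d)).
  set (hs := fun i => hh r lam (x0 + INR i * d)).
  assert (Hid : d * sumF hs L - phi r lam x0 =
     sumF (fun i => d * hs i - (p i - p (S i))) L - p L).
  { rewrite sumF_minus, sumF_scal, sumF_tele. unfold p. simpl INR.
    replace (x0 + 0 * d) with x0 by ring. ring. }
  fold hs. rewrite Hid.
  assert (HpL : 0 <= p L).
  { unfold p, phi. apply Rlt_le, Rdiv_lt_0_compat. apply exp_pos.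
    assert (0 <= INR L * d) by (apply Rmult_le_pos; [apply pos_INR|lra]).
    apply Gp_pos; lra. }
  eapply Rle_trans. apply Rabs_triang. rewrite Rabs_Ropp, (Rabs_right (p L)) by lra.
  apply Rplus_le_compat_r.
  eapply Rle_trans. apply sumF_abs.
  assert (Hx03 : 0 < x0^3) by (apply pow_lt; lra).
  eapply Rle_trans. apply sumF_le with (g' := fun i => Cst1 r / x0^3 * (d * hs i)).
  { intros i Hil. unfold p, hs.
    assert (HxiX := Hi i Hil).
    assert (0 <= INR i * d) by (apply Rmult_le_pos; [apply pos_INR|lra]).
    replace (x0 + INR (S i) * d) with ((x0 + INR i * d) + d) by (rewrite S_INR; ring).
    eapply Rle_trans. apply (step r lam X); try lra.
    assert (Hc : 0 <= Cst1 r) by (unfold Cst1; nra).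
    assert (Hh : 0 < hh r lam (x0 + INR i * d)) by apply exp_pos.
    assert (x0^3 <= (x0 + INR i * d)^3) by (apply pow_incr; lra).
    assert (0 < (x0 + INR i * d)^3) by lra.
    replace (Cst1 r * (d * hh r lam (x0 + INR i * d) / (x0 + INR i * d)^3))
      with ((Cst1 r * d * hh r lam (x0 + INR i * d)) * / (x0 + INR i * d)^3) by (field; lra).
    replace (Cst1 r / x0^3 * (d * hh r lam (x0 + INR i * d)))
      with ((Cst1 r * d * hh r lam (x0 + INR i * d)) * / x0^3) by (field; lra).
    apply Rmult_le_compat_l. apply Rmult_le_pos. apply Rmult_le_pos; lra. lra.
    apply Rinv_le_contravar; lra. }
  rewrite sumF_scal, sumF_scal.
  pose proof (sum_bound r lam X d x0 L Hr HX Hl Hd HdX Hx1 Hlx HxX) as Hsb. fold hs in Hsb.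

  assert (Hc : 0 <= Cst1 r / x0^3) by (unfold Rdiv; apply Rmult_le_pos; [unfold Cst1; nra | left; apply Rinv_0_lt_compat; lra]).
  eapply Rle_trans. apply Rmult_le_compat_l. exact Hc. exact Hsb.
  right. field. lra.
Qed.

Lemma tail_bound r lam X Y : 0 <= r -> 1 <= X -> 3 * lam <= X -> X <= Y <= 2 * X ->
  phi r lam Y <= 80/7 * exp (r * ln 2) * exp ((r - 2) * ln X - G lam X).
Proof.
  intros Hr HX Hl HY.
  unfold phi, hh.
  assert (HGp : 7/80 * X^2 <= G' lam Y).
  { pose proof (Gp_lb lam Y ltac:(lra) ltac:(lra)). assert (X^2 <= Y^2) by (apply pow_incr; lra).
    assert (0 <= lam^2) by nra. lra. }
  assert (HX2 : 0 < X^2) by (apply pow_lt; lra).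
  assert (HGY : G lam X <= G lam Y).
  { pose proof (G_diff2 lam X (Y - X)). replace (X + (Y - X)) with Y in H by ring.
    assert (0 < G' lam X) by (apply Gp_pos; lra).
    assert (0 <= Gpp lam X) by (unfold Gpp; lra).
    assert (0 <= Y - X) by lra.
    assert (0 <= (Y - X) * G' lam X) by nra.
    assert (0 <= (Y - X)^2 * Gpp lam X / 2) by (assert (0 <= (Y-X)^2) by nra; unfold Rdiv; apply Rmult_le_pos; [nra|lra]).
    assert (0 <= (Y - X)^3 / 8) by (assert (0 <= (Y-X)^3) by (apply pow_le; lra); lra).
    lra. }
  assert (HlnY : ln Y <= ln 2 + ln X).
  { rewrite <- ln_mult by lra. apply ln_le'; lra. }
  assert (Hnum : exp (r * ln Y - G lam Y) <= exp (r * ln 2) * exp (r * ln X - G lam X)).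
  { rewrite <- exp_plus. apply exp_le. assert (r * ln Y <= r * (ln 2 + ln X)) by (apply Rmult_le_compat_l; lra). lra. }
  assert (E : exp ((r - 2) * ln X - G lam X) = exp (r * ln X - G lam X) / X^2).
  { replace ((r - 2) * ln X - G lam X) with ((r * ln X - G lam X) + - (2 * ln X)) by ring.
    rewrite exp_plus, exp_Ropp. replace (2 * ln X) with (ln X + ln X) by ring. rewrite exp_plus, exp_ln by lra.
    field. lra. }
  rewrite E.
  assert (Hp : 0 < G' lam Y) by lra.
  assert (0 < exp (r * ln Y - G lam Y)) by apply exp_pos.
  apply Rle_trans with (exp (r * ln 2) * exp (r * ln X - G lam X) / G' lam Y).
  { unfold Rdiv. apply Rmult_le_compat_r. left; apply Rinv_0_lt_compat; lra. exact Hnum. }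
  apply Rle_trans with (exp (r * ln 2) * exp (r * ln X - G lam X) / (7/80 * X^2)).
  { unfold Rdiv. apply Rmult_le_compat_l. apply Rmult_le_pos; left; apply exp_pos.
    apply Rinv_le_contravar; nra. }
  right. field. lra.
Qed.

Lemma Rpower_nat_sp x (n : nat) : 0 < x -> Rpower x (INR n) = x ^ n.
Proof. apply Rpower_pow. Qed.

Lemma nfloor_spec y : 0 <= y -> INR (nfloor y) <= y /\ y < INR (nfloor y) + 1.
Proof.
  intros Hy. unfold nfloor. destruct (base_Int_part y) as [H1 H2].
  assert (Hz : (0 <= Int_part y)%Z).
  { assert (-1 < IZR (Int_part y)) by lra. apply lt_IZR in H. lia. }
  rewrite INR_IZR_INZ, Z2Nat.id by exact Hz. lra.
Qed.

Lemma le_div a b c : 0 < c -> a * c <= b -> a <= b / c.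
Proof. intros. apply Rmult_le_reg_r with c. lra. replace (b / c * c) with b by (field; lra). lra. Qed.

Lemma div_le a b c : 0 < c -> a <= b * c -> a / c <= b.
Proof. intros. apply Rmult_le_reg_r with c. lra. replace (a / c * c) with a by (field; lra). lra. Qed.

Theorem lemma5p3 :
  forall r : R, 0 <= r ->
  exists C : R, exists N : nat,
  forall (n : nat) (lam : R) (k : nat),
    (N <= n)%nat ->
    Rmax 1 (3 * lam) * Rpower (INR n) (2 / 3) <= INR k ->
    INR k <= Rpower (INR n) (3 / 4) ->
    Rabs lam <= Rpower (INR n) (1 / 12) ->
    let s := Rpower (INR n) (2 / 3) in
    let x := INR k / s in
    let g := Rpower x r / G' lam x * exp (- G lam x) in
    Rabs (/ s * sum_range k (nfloor (Rpower (INR n) (3 / 4)))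
                 (fun j => Rpower (INR j / s) r * exp (- G lam (INR j / s)))
          - g)
    <= C * Rabs g * (INR n ^ 2 / INR k ^ 3)
       + C * (Rpower (INR n) ((r - 2) / 12) * exp (- G lam (Rpower (INR n) (1 / 12)))).
Proof.
  intros r Hr.
  set (B := 2 + 2 * r).
  set (CA := Cst1 r * (2 * exp (6/5 * r^2))).
  set (CB := 80/7 * exp (r * ln 2)).
  assert (HCA : 0 <= CA).
  { unfold CA, Cst1. apply Rmult_le_pos. nra. assert (0 < exp (6/5*r^2)) by apply exp_pos. lra. }
  assert (HCB : 0 <= CB) by (unfold CB; assert (0 < exp (r * ln 2)) by apply exp_pos; lra).
  destruct (INR_archimed 1 (B^12) ltac:(lra)) as [N HN].
  exists (CA + CB), N.
  intros n lam k HnN Hk1 Hk2 Hl s x0 g.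
  set (nR := INR n) in *.
  assert (HB1 : 1 <= B^12) by (unfold B; apply pow_R1_Rle; lra).
  assert (HnR : B^12 <= nR) by (unfold nR; apply le_INR in HnN; lra).
  assert (HnR0 : 0 < nR) by lra.
  set (X := Rpower nR (1/12)) in *.
  assert (HXB : B <= X).
  { unfold X. replace B with (Rpower (B^12) (1/12)).
    apply Rle_Rpower_l; lra.
    rewrite <- (Rpower_pow 12 B) by (unfold B; lra). rewrite Rpower_mult.
    replace (INR 12 * (1/12)) with 1 by (simpl; field). apply Rpower_1. unfold B; lra. }
  assert (HX0 : 0 < X) by (unfold B in HXB; lra).
  assert (HXpow : forall m : nat, Rpower nR (INR m / 12) = X ^ m).
  { intros m. unfold X. rewrite <- Rpower_pow by (unfold Rpower; apply exp_pos). rewrite Rpower_mult. f_equal. field. }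
  assert (Hs : s = X^8).
  { unfold s. rewrite <- HXpow. f_equal. simpl; field. }
  assert (H34 : Rpower nR (3/4) = X^9).
  { rewrite <- HXpow. f_equal. simpl; field. }
  assert (HnX : nR = X^12).
  { rewrite <- HXpow. replace (INR 12 / 12) with 1 by (simpl; field). rewrite Rpower_1; lra. }
  rewrite H34 in *.
  assert (HX2 : 2 <= X) by (unfold B in HXB; lra).
  assert (HX3 : 8 <= X^3).
  { replace (X^3) with (X * X * X) by ring. replace 8 with (2 * 2 * 2) by ring.
    apply Rmult_le_compat; try lra. apply Rmult_le_compat; lra. }
  assert (HX8 : 0 < X^8) by (apply pow_lt; lra).
  set (d := / s).
  assert (Hd : 0 < d) by (unfold d; rewrite Hs; apply Rinv_0_lt_compat; lra).
  assert (HdX : d * X^5 <= 1/2).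
  { unfold d. rewrite Hs. replace (/ X^8 * X^5) with (/ X^3) by (field; lra).
    replace (1/2) with (/ 2) by field. apply Rinv_le_contravar; lra. }
  assert (Hrd : r * d <= 1/2).
  { unfold d. rewrite Hs. assert (X <= X^8).
    { replace (X^8) with (X * X^7) by ring. assert (1 <= X^7) by (apply pow_R1_Rle; lra). nra. }
    apply Rmult_le_reg_r with (X^8). lra. unfold B in HXB.
    replace (r * / X^8 * X^8) with r by (field; lra). nra. }
  assert (Hsp : 0 < s) by (rewrite Hs; lra).
  assert (Hmax1 := Rmax_l 1 (3 * lam)). assert (Hmax2 := Rmax_r 1 (3 * lam)).
  change (Rpower nR (2/3)) with s in Hk1.
  assert (Hks : s <= INR k).
  { apply Rle_trans with (Rmax 1 (3 * lam) * s); [|exact Hk1].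
    rewrite <- (Rmult_1_l s) at 1. apply Rmult_le_compat_r; lra. }
  assert (Hks2 : 3 * lam * s <= INR k).
  { apply Rle_trans with (Rmax 1 (3 * lam) * s); [|exact Hk1]. apply Rmult_le_compat_r; lra. }
  assert (Hx1 : 1 <= x0).
  { unfold x0. apply le_div; lra. }
  assert (Hlx : 3 * lam <= x0).
  { unfold x0. apply le_div; lra. }
  assert (HxX : x0 <= X).
  { unfold x0. apply div_le. lra. rewrite Hs. replace (X * X^8) with (X^9) by ring. lra. }
  assert (HX9 : 0 <= X^9) by (apply pow_le; lra).
  destruct (nfloor_spec (X^9) HX9) as [HM1 HM2].
  set (M := nfloor (X^9)) in *.
  assert (HkM : (k <= M)%nat).
  { assert (INR k < INR (S M)) by (rewrite S_INR; lra). apply INR_lt in H. lia. }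
  rewrite sum_range_F.
  set (L := (S M - k)%nat).
  assert (HkL : (k + L = S M)%nat) by (unfold L; lia).
  cbv beta.
  assert (Hsum : d * sumF (fun i => Rpower (INR (k + i) / s) r * exp (- G lam (INR (k + i) / s))) L
                 = d * sumF (fun i => hh r lam (x0 + INR i * d)) L).
  { f_equal. apply sumF_ext. intros i _.
    unfold hh, Rpower. rewrite <- exp_plus.
    replace (INR (k + i) / s) with (x0 + INR i * d). f_equal; ring.
    unfold x0, d. rewrite plus_INR. field. lra. }
  rewrite Hsum.
  assert (Hg : g = phi r lam x0).
  { unfold g, phi, hh, Rpower. unfold Rminus. rewrite exp_plus. field.
    apply Rgt_not_eq, Gp_pos; lra. }
  rewrite Hg.
  assert (Hi : forall i, (i < L)%nat -> x0 + INR i * d <= X).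
  { intros i Hi. replace (x0 + INR i * d) with (INR (k + i) / s) by (unfold x0, d; rewrite plus_INR; field; lra).
    apply div_le. lra.
    assert (INR (k + i) <= INR M) by (apply le_INR; lia). rewrite Hs. replace (X * X^8) with (X^9) by ring. lra. }
  assert (Habs : Rabs lam <= X) by exact Hl.
  pose proof (main_real r lam X d x0 L Hr HX2 Habs Hd HdX Hrd Hx1 Hlx HxX Hi) as Hmain.
  set (Y := x0 + INR L * d) in *.
  assert (HY : X <= Y <= 2 * X).
  { assert (EY : Y = INR (S M) / s) by (unfold Y, x0, d; rewrite <- HkL, plus_INR; field; lra).
    rewrite EY, S_INR. rewrite Hs.
    split. apply le_div. lra. replace (X * X^8) with (X^9) by ring. lra.
    apply div_le. lra. replace (2 * X * X^8) with (2 * X^9) by ring. assert (1 <= X^9) by (apply pow_R1_Rle; lra). lra. }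
  pose proof (tail_bound r lam X Y Hr ltac:(lra) ltac:(lra) HY) as Htail.
  assert (Hphi0 : 0 < phi r lam x0).
  { unfold phi. apply Rdiv_lt_0_compat. apply exp_pos. apply Gp_pos; lra. }
  assert (HT : Rpower nR ((r - 2) / 12) * exp (- G lam X) = exp ((r - 2) * ln X - G lam X)).
  { unfold Rpower at 1. rewrite <- exp_plus. f_equal. unfold X. rewrite ln_Rpower. field. }
  rewrite HT.
  assert (HP : phi r lam x0 / x0^3 = Rabs (phi r lam x0) * (nR^2 / INR k ^ 3)).
  { rewrite Rabs_right by lra. unfold x0. rewrite HnX, Hs. field. split; lra. }
  assert (0 <= phi r lam x0 / x0^3) by (apply Rlt_le, Rdiv_lt_0_compat; [lra | apply pow_lt; lra]).
  assert (0 < exp ((r - 2) * ln X - G lam X)) by apply exp_pos.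
  assert (HPn : 0 <= Rabs (phi r lam x0) * (nR ^ 2 / INR k ^ 3)) by (rewrite <- HP; lra).
  eapply Rle_trans. exact Hmain. fold CA. rewrite HP.
  apply Rplus_le_compat.
  - rewrite (Rmult_assoc (CA + CB)). apply Rmult_le_compat_r; lra.
  - eapply Rle_trans. exact Htail. fold CB. apply Rmult_le_compat_r; lra.
Qed.
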